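(* Let $N\ge2$ and $F\in GL_N(\mathbb{C})$ with $\mathrm{Tr}(F^*F)=\mathrm{Tr}((F^*F)^{-1})$. Then $\omega(R(U_F^+))=\omega_{X_{can}}(R(U_F^+))$, where $X_{can}=\{\alpha,\bar\alpha\}$.
   Context: Define $0<q\le1$ by $q+q^{-1}=\mathrm{Tr}(F^*F)$ and $[x]_q=\frac{q^{-x}-q^x}{q^{-1}-q}$ ($[x]_1=x$). $R(U_F^+)$ is the fusion algebra of the free unitary quantum group with quantum dimension: irreducibles are words in the free monoid on $\alpha,\bar\alpha$ ($\alpha$ the fundamental representation, empty word $e$ trivial), the involution reverses words and swaps $\alpha\leftrightarrow\bar\alpha$, product $x\cdot y=\sum_{a,b,c:\ x=ac,\ y=\bar cb}ab$. With $w^n_{+1}=\alpha\bar\alpha\alpha\cdots$, $w^n_{-1}=\bar\alpha\alpha\bar\alpha\cdots$ ($n$ letters), each nonempty word is uniquely a concatenation $w^{k_1}_{\varepsilon_1}\cdots w^{k_m}_{\varepsilon_m}$ of maximal alternating blocks and has quantum dimension $[k_1+1]_q\cdots[k_m+1]_q$. For a finite generating set $X$ (finite, involution-closed, every word appears with nonzero coefficient in some product of elements of $X$): $\ell_X$ word length, $B_X(n)=\{\beta:\ell_X(\beta)\le n\}$, $|B_X(n)|=\sum_{\beta\in B_X(n)}d(\beta)^2$, $\omega_X=\lim_n|B_X(n)|^{1/n}$ (exists), $\omega=\inf_X\omega_X$. *)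

(* Defs.v *)
From HB Require Import structures.
From mathcomp Require Import all_boot all_order all_algebra.
From mathcomp Require Import complex.
From mathcomp Require Import all_classical all_reals all_analysis.
Set Implicit Arguments. Unset Strict Implicit. Unset Printing Implicit Defensive.
Import Order.TTheory GRing.Theory Num.Theory.
Local Open Scope ring_scope.

(* Irreducibles of R(U_F^+): words in the free monoid on {alpha, alphabar}.
   Letter [true] = alpha, letter [false] = alphabar, [::] = trivial rep e. *)
Definition word := seq bool.

Definition wconj (w : word) : word := rev (map negb w).

(* x . y = sum_{x = a c, y = wconj c b} a b  (as a list with multiplicities) *)
Definition fusion (x y : word) : seq word :=
  [seq take (size x - k) x ++ drop k y |
     k <- iota 0 (minn (size x) (size y)).+1 &
     take k y == wconj (drop (size x - k) x)].

(* lengths k_1, ..., k_m of the maximal alternating blocks of a word *)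
Fixpoint alt_blocks_aux (prev : bool) (cur : nat) (w : word) : seq nat :=
  match w with
  | [::] => [:: cur]
  | b :: w' => if b == prev then cur :: alt_blocks_aux b 1 w'
               else alt_blocks_aux b cur.+1 w'
  end.
Definition alt_blocks (w : word) : seq nat :=
  if w is b :: w' then alt_blocks_aux b 1 w' else [::].

Section Growth.
Variable R : realType.

Definition qint (q : R) (x : nat) : R :=
  if q == 1 then x%:R
  else (q ^- x - q ^+ x) / (q^-1 - q).

Definition qdim (q : R) (w : word) : R :=
  \prod_(k <- alt_blocks w) qint q k.+1.

(* support of all products of exactly n elements of X (n = 0: the unit e) *)
Fixpoint prod_support (X : seq word) (n : nat) : seq word :=
  if n is m.+1 then
    flatten [seq fusion u x | u <- prod_support X m, x <- X]
  else [:: [::]].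

Definition generating (X : seq word) : Prop :=
  (forall x, x \in X -> wconj x \in X) /\
  (forall w : word, exists n, w \in prod_support X n).

Definition ball (X : seq word) (n : nat) : seq word :=
  undup (flatten [seq prod_support X m | m <- iota 0 n.+1]).

Definition ball_size (q : R) (X : seq word) (n : nat) : R :=
  \sum_(w <- ball X n) qdim q w ^+ 2.

Definition omegaX (q : R) (X : seq word) : R :=
  limn (fun n : nat => ball_size q X n `^ (n%:R^-1)).

Definition omega (q : R) : R :=
  inf [set omegaX q X | X in generating].

End Growth.

Definition Xcan : seq word := [:: [:: true]; [:: false]].

Definition adjmx (R : rcfType) (N : nat) (F : 'M[R[i]]_N) : 'M[R[i]]_N :=
  (map_mx conjc F)^T.

(* Main.v *)
Require Import Defs.
From HB Require Import structures.
From mathcomp Require Import all_boot all_order all_algebra.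
From mathcomp Require Import complex.
From mathcomp Require Import all_classical all_reals all_analysis.
From mathcomp Require Import zify ring lra.
Import Order.TTheory GRing.Theory Num.Theory.
Local Open Scope ring_scope.
Set Implicit Arguments. Unset Strict Implicit. Unset Printing Implicit Defensive.

Lemma wconj_cat (a b : word) : wconj (a ++ b) = wconj b ++ wconj a.
Proof. by rewrite /wconj map_cat rev_cat. Qed.

Lemma wconjK (w : word) : wconj (wconj w) = w.
Proof. rewrite /wconj map_rev revK -map_comp; elim: w => //= b w ->; by rewrite negbK. Qed.

Lemma size_wconj (w : word) : size (wconj w) = size w.
Proof. by rewrite /wconj size_rev size_map. Qed.

Lemma wconj_nil : wconj [::] = [::]. Proof. by []. Qed.

Lemma fusionP (x y z : word) :
  z \in fusion x y <-> exists a b c, [/\ x = a ++ c, y = wconj c ++ b & z = a ++ b].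
Proof.
split.
- case/mapP => k; rewrite mem_filter mem_iota add0n ltnS leq_min => /andP[/eqP e /and3P[_ kx ky]] ->.
  exists (take (size x - k) x), (drop k y), (drop (size x - k) x); split.
  + by rewrite cat_take_drop.
  + by rewrite -e cat_take_drop.
  + by [].
- case=> a [b [c [-> -> ->]]].
  apply/mapP; exists (size c).
  + rewrite mem_filter mem_iota add0n ltnS leq_min !size_cat size_wconj leq_addl leq_addr andbT /=.
    by rewrite andbT addnK drop_size_cat // -(size_wconj c) take_size_cat.
  + by rewrite size_cat addnK take_size_cat // -(size_wconj c) drop_size_cat.
Qed.

Lemma cat_split (a b c d : word) : a ++ b = c ++ d ->
  (exists e, c = a ++ e /\ b = e ++ d) \/ (exists e, a = c ++ e /\ d = e ++ b).
Proof.
elim: a c => [|x a IH] c /=.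
  by move=> ->; left; exists c.
case: c => [|y c] /=.
  by move=> <-; right; exists (x :: a).
case=> -> /IH [[e [-> ->]]|[e [-> ->]]].
  by left; exists e.
by right; exists e.
Qed.

Lemma fusion_assoc (x y w z u : word) :
  u \in fusion x y -> z \in fusion u w ->
  exists2 v, v \in fusion y w & z \in fusion x v.
Proof.
case/fusionP=> a1 [b1 [c1 [-> -> ->]]].
case/fusionP=> a2 [b2 [c2 [/cat_split [[e [-> ->]]|[e [-> ->]]] -> ->]]].
- exists (wconj c1 ++ e ++ b2).
  + apply/fusionP; exists (wconj c1 ++ e), b2, c2.
    by rewrite ?wconj_cat -?catA.
  + apply/fusionP; exists a1, (e ++ b2), c1.
    by rewrite ?wconj_cat -?catA.
- exists (wconj c1 ++ wconj e ++ b2).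
  + apply/fusionP; exists (wconj c1), (wconj e ++ b2), b1.
    by rewrite ?wconj_cat -?catA.
  + apply/fusionP; exists a2, b2, (e ++ c1).
    by rewrite ?wconj_cat -?catA.
Qed.

Lemma fusion_cat (x y : word) : x ++ y \in fusion x y.
Proof. by apply/fusionP; exists x, y, [::]; rewrite cats0. Qed.

Lemma fusion_size (x y z : word) : z \in fusion x y -> (size z <= size x + size y)%N.
Proof.
case/fusionP=> a [b [c [-> -> ->]]]; rewrite !size_cat size_wconj.
lia.
Qed.

Lemma wconj_rcons (s : word) a : wconj (rcons s a) = ~~ a :: wconj s.
Proof. by rewrite /wconj map_rcons rev_rcons. Qed.

Lemma fusion_rec (x y : word) a b :
  fusion (rcons x a) (b :: y) =
  (rcons x a ++ b :: y) :: (if b == ~~ a then fusion x y else [::]).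
Proof.
rewrite /fusion size_rcons [size (b :: y)]/= minnSS.
set m := minn (size x) (size y).
have -> : iota 0 m.+2 = 0%N :: [seq (1 + i)%N | i <- iota 0 m.+1] by rewrite -(iotaDl 1 0).
have : forall k, k \in iota 0 m.+1 -> (k <= size x)%N.
  by move=> k; rewrite mem_iota add0n ltnS => /leq_trans; apply; apply: geq_minl.
move: (iota 0 m.+1) => l hl.
rewrite /=.
have -> : drop ((size x).+1 - 0) (rcons x a) = [::] by rewrite subn0 drop_oversize // size_rcons.
rewrite eqxx /= subn0 take_oversize ?size_rcons // filter_map -map_comp.
congr (_ :: _).
have Hd : forall k, k \in l -> drop ((size x).+1 - (1 + k)) (rcons x a) = rcons (drop (size x - k) x) a.
  by move=> k /hl hk; rewrite add1n subSS drop_rcons // leq_subr.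
case: eqP => [->|nb].
- rewrite (@eq_in_filter _ _ (fun k => take k y == wconj (drop (size x - k) x))); last first.
    by move=> k hk; rewrite /preim /= Hd // wconj_rcons ?add1n /= eqseq_cons eqxx.
  apply/eq_in_map => k; rewrite mem_filter => /andP[_ hk] /=.
  by rewrite ?add1n subSS -cats1 takel_cat ?leq_subr.
- rewrite (@eq_in_filter _ _ pred0) ?filter_pred0 //.
  move=> k hk; rewrite /preim /= Hd // wconj_rcons ?add1n /= eqseq_cons.
  by case: eqP.
Qed.


Lemma fusion_nil_l (y : word) : fusion [::] y = [:: y].
Proof. by rewrite /fusion /= min0n /= take0 /= drop0. Qed.

Lemma fusion_nil_r (x : word) : fusion x [::] = [:: x].
Proof. by rewrite /fusion /= subn0 drop_size /= subn0 take_size cats0. Qed.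

Lemma qint_rec (R : realType) (q : R) n : 0 < q ->
  qint q n.+2 = (q + q^-1) * qint q n.+1 - qint q n.
Proof.
move=> q0; rewrite /qint; case: eqP => [->|/eqP q1].
  by rewrite invr1 -!natr1; ring.
have qn0 : q != 0 by rewrite gt_eqF.
have hd : q^-1 - q != 0.
  apply: contra q1; rewrite subr_eq0 => /eqP h.
  have : q * q = 1 by rewrite -{1}h mulVf.
  move/eqP; rewrite -expr2 sqrf_eq1 => /orP[//|/eqP qm].
  by move: q0; rewrite qm oppr_gt0 ltr10.
rewrite -!exprVn !exprS.
set P := q^-1 ^+ n; set Q := q ^+ n.
have h1 : 1 - q != 0 by rewrite subr_eq0 eq_sym.
have h2 : 1 + q != 0 by rewrite gt_eqF //; lra.
field; rewrite qn0 /=.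
have -> : 1 + - q * q = (1 - q) * (1 + q) by ring.
by rewrite mulf_neq0.
Qed.

Lemma qden_neq0 (R : realType) (q : R) : 0 < q -> q != 1 -> q^-1 - q != 0.
Proof.
move=> q0 q1; apply: contra q1; rewrite subr_eq0 => /eqP h.
have qn0 : q != 0 by rewrite gt_eqF.
have : q * q = 1 by rewrite -{1}h mulVf.
move/eqP; rewrite -expr2 sqrf_eq1 => /orP[//|/eqP qm].
by move: q0; rewrite qm oppr_gt0 ltr10.
Qed.

Lemma qint0 (R : realType) (q : R) : qint q 0 = 0.
Proof. by rewrite /qint; case: ifP => _; rewrite ?expr0 ?invr1 ?subrr ?mul0r. Qed.

Lemma qint1 (R : realType) (q : R) : 0 < q -> qint q 1 = 1.
Proof.
move=> q0; rewrite /qint; case: eqP => // /eqP q1.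
by rewrite expr1 divff // qden_neq0.
Qed.

Lemma qt_ge2 (R : realType) (q : R) : 0 < q -> 2 <= q + q^-1.
Proof.
move=> q0; rewrite -(ler_pM2l q0) [X in _ <= X]mulrDr mulfV ?lt0r_neq0 //.
rewrite -subr_ge0 (_ : q * q + 1 - q * 2 = (q - 1) ^+ 2); [exact: sqr_ge0 | ring].
Qed.

Lemma qint_ge0_mono (R : realType) (q : R) n : 0 < q ->
  0 <= qint q n /\ qint q n <= qint q n.+1.
Proof.
move=> q0; have t2 := qt_ge2 q0.
elim: n => [|n [h0 h1]]; first by rewrite qint0 qint1 // lexx ler01.
split; first by apply: le_trans h1.
rewrite qint_rec //.
have : 0 <= qint q n.+1 by apply: le_trans h1.
nra.
Qed.

Lemma qint_ge0 (R : realType) (q : R) n : 0 < q -> 0 <= qint q n.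
Proof. by move=> q0; case: (qint_ge0_mono n q0). Qed.

Lemma qint_mono (R : realType) (q : R) m n : 0 < q -> (m <= n)%N -> qint q m <= qint q n.
Proof.
move=> q0; elim: n => [|n IH]; first by rewrite leqn0 => /eqP ->.
rewrite leq_eqVlt => /orP[/eqP ->//|]; rewrite ltnS => /IH h.
by apply: le_trans h _; case: (qint_ge0_mono n q0).
Qed.

Lemma qint_ge1 (R : realType) (q : R) n : 0 < q -> 1 <= qint q n.+1.
Proof. by move=> q0; rewrite -(qint1 q0); apply: qint_mono. Qed.

Lemma qint_mul (R : realType) (q : R) k l : 0 < q ->
  qint q k.+1 * qint q l.+1 = qint q (k + l).+1 + qint q k * qint q l.
Proof.
move=> q0.
suff : forall l, qint q k.+1 * qint q l.+1 = qint q (k + l).+1 + qint q k * qint q l /\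
  qint q k.+1 * qint q l.+2 = qint q (k + l.+1).+1 + qint q k * qint q l.+1 by case/(_ l).
elim=> [|m [h1 h2]].
  rewrite qint1 // qint0 // addn0 mulr1 mulr0 addr0; split => //.
  rewrite addn1 qint_rec // qint1 // qint_rec // qint0 // subr0.
  set t := q + q^-1. ring.
split => //.
rewrite [qint q m.+3]qint_rec // mulrBr mulrCA h2 h1 [qint q m.+2]qint_rec // !addnS.
rewrite [qint q (k + m).+3]qint_rec //.
by set t := q + q^-1; ring.
Qed.

Lemma qint_le_pow (R : realType) (q : R) n : 0 < q -> qint q n.+1 <= (q + q^-1) ^+ n.
Proof.
move=> q0; have t2 := qt_ge2 q0.
elim: n => [|n IH]; first by rewrite qint1 // expr0.
rewrite qint_rec // exprS.
have := qint_ge0 n q0.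
have := qint_ge0 n.+1 q0.
nra.
Qed.

Definition alt (w : word) : bool := sorted (fun a b : bool => a != b) w.
Definition brk (u v : word) : bool := [|| u == [::], v == [::] | last true u == head true v].

Lemma aux_cat (u v : word) p c b : last p u = b ->
  alt_blocks_aux p c (u ++ b :: v) = alt_blocks_aux p c u ++ alt_blocks_aux b 1 v.
Proof.
elim: u p c => [|a u IH] p c /=; first by move=> ->; rewrite eqxx.
by move=> hl; case: eqP => _; rewrite IH.
Qed.

Lemma alt_blocks_cat (u v : word) : brk u v ->
  alt_blocks (u ++ v) = alt_blocks u ++ alt_blocks v.
Proof.
case: v => [|b v]; first by rewrite !cats0.
case: u => [|a u]; first by [].
by move=> /or3P[//|//|/eqP hl] /=; apply: aux_cat.
Qed.

Lemma qdim_cat (R : realType) (q : R) (u v : word) : brk u v ->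
  qdim q (u ++ v) = qdim q u * qdim q v.
Proof. by move=> h; rewrite /qdim alt_blocks_cat // big_cat. Qed.

Lemma aux_alt (w : word) p c : path (fun a b : bool => a != b) p w ->
  alt_blocks_aux p c w = [:: (c + size w)%N].
Proof.
elim: w p c => [|a w IH] p c /=; first by rewrite addn0.
case/andP=> /negbTE; rewrite eq_sym => -> /IH ->; by rewrite addSnnS.
Qed.

Lemma qdim_nil (R : realType) (q : R) : qdim q [::] = 1.
Proof. by rewrite /qdim /= big_nil. Qed.

Lemma qdim_alt (R : realType) (q : R) (w : word) : 0 < q -> alt w ->
  qdim q w = qint q (size w).+1.
Proof.
move=> q0; case: w => [|a w]; first by rewrite qdim_nil qint1.
by move=> h; rewrite /qdim /= aux_alt // big_seq1 add1n.
Qed.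

Lemma sumn_aux (w : word) p c : sumn (alt_blocks_aux p c w) = (c + size w)%N.
Proof.
elim: w p c => [|a w IH] p c /=; first by rewrite !addn0.
case: eqP => _ /=; rewrite IH; lia.
Qed.

Lemma sumn_blocks (w : word) : sumn (alt_blocks w) = size w.
Proof. by case: w => [|a w] //=; rewrite sumn_aux add1n. Qed.

Lemma prod_qint_ge (R : realType) (q : R) (s : seq nat) : 0 < q ->
  qint q (sumn s).+1 <= \prod_(k <- s) qint q k.+1.
Proof.
move=> q0; elim: s => [|k s IH]; first by rewrite big_nil qint1.
rewrite big_cons /=.
apply: le_trans (_ : qint q k.+1 * qint q (sumn s).+1 <= _); last first.
  by apply: ler_wpM2l => //; apply: qint_ge0.
rewrite qint_mul // lerDl.
by apply: mulr_ge0; apply: qint_ge0.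
Qed.

Lemma qdim_ge (R : realType) (q : R) (w : word) : 0 < q -> qint q (size w).+1 <= qdim q w.
Proof. by move=> q0; rewrite /qdim -sumn_blocks; apply: prod_qint_ge. Qed.

Lemma qdim_ge1 (R : realType) (q : R) (w : word) : 0 < q -> 1 <= qdim q w.
Proof. by move=> q0; apply: le_trans (qdim_ge w q0); apply: qint_ge1. Qed.

Lemma qdim_ge0 (R : realType) (q : R) (w : word) : 0 < q -> 0 <= qdim q w.
Proof. by move=> q0; apply: le_trans (qdim_ge1 w q0). Qed.

Lemma qdim_le_pow (R : realType) (q : R) (w : word) : 0 < q ->
  qdim q w <= (q + q^-1) ^+ size w.
Proof.
move=> q0; rewrite /qdim -sumn_blocks.
elim: (alt_blocks w) => [|k s IH]; first by rewrite big_nil expr0.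
rewrite big_cons /= exprD.
apply: ler_pM => //; first exact: qint_ge0.
- by apply: prodr_ge0 => i _; apply: qint_ge0.
- exact: qint_le_pow.
Qed.

Lemma last_block (x : word) a : exists P A1,
  [/\ x = P ++ A1, alt (rcons A1 a) & brk P (rcons A1 a)].
Proof.
elim/last_ind: x a => [|x c IH] a.
  by exists [::], [::].
case: (IH c) => P [A1 [-> hA hb]].
case: (eqVneq c a) => [ca|ca].
- exists (rcons (P ++ A1) c), [::]; split => //; first by rewrite cats0.
  by rewrite /brk /= last_rcons ca eqxx !orbT.
- exists P, (rcons A1 c); split; first by rewrite rcons_cat.
  + move: hA; rewrite /alt; case: A1 {hb} => [|h t] /=; first by rewrite ca.
    by rewrite !rcons_path last_rcons ca andbT.
  + move: hb; rewrite /brk; case: A1 {hA} => [|h t] //=.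
Qed.

Lemma first_block (y : word) b : exists B1 Q,
  [/\ y = B1 ++ Q, alt (b :: B1) & brk (b :: B1) Q].
Proof.
elim: y b => [|c y IH] b.
  by exists [::], [::].
case: (IH c) => B1 [Q [-> hA hb]].
case: (eqVneq b c) => [bc|bc].
- exists [::], (c :: B1 ++ Q); split => //.
  by rewrite /brk /= bc.
- exists (c :: B1), Q; split => //.
  by rewrite /alt /= bc; exact: hA.
Qed.

Lemma alt_cat (A B : word) : A != [::] -> B != [::] -> alt A -> alt B ->
  last true A != head true B -> alt (A ++ B).
Proof.
case: A => [|a A] // _; case: B => [|b B] // _.
rewrite /alt /= cat_path => -> /= -> /= ->.
by rewrite andbT.
Qed.

Lemma alt_rcons (A : word) a : alt (rcons A a) -> alt A.
Proof. by case: A => [|h t] //; rewrite /alt /= rcons_path => /andP[]. Qed.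

Lemma alt_behead (B : word) b : alt (b :: B) -> alt B.
Proof. by rewrite /alt /= => /path_sorted. Qed.

Lemma brk_catr (P A C : word) : brk P A -> A != [::] -> brk P (A ++ C).
Proof.
rewrite /brk; case: A => [|h A] // /or3P[->|//|/eqP ->] _ /=; by rewrite ?eqxx ?orbT.
Qed.

Lemma brk_catl (M C Q : word) : brk C Q -> C != [::] -> brk (M ++ C) Q.
Proof.
rewrite /brk; case: C => [|h C] // /or3P[//|->|/eqP <-] _; first by rewrite ?orbT.
by rewrite last_cat /= eqxx ?orbT.
Qed.

Lemma fusion_dim (R : realType) (q : R) (x y : word) : 0 < q ->
  \sum_(z <- fusion x y) qdim q z = qdim q x * qdim q y.
Proof.
move=> q0.
elim/last_ind: x y => [|x a IH] y.
  by rewrite fusion_nil_l big_seq1 qdim_nil mul1r.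
case: y => [|b y]; first by rewrite fusion_nil_r big_seq1 qdim_nil mulr1.
rewrite fusion_rec big_cons.
case: (eqVneq b (~~ a)) => [hb|hb]; last first.
  rewrite big_nil addr0 qdim_cat //.
  by rewrite /brk last_rcons /=; case: a b hb => [] [] //=; rewrite !orbT.
rewrite IH.
case: (last_block x a) => P [A1 [hx hA hPA]].
case: (first_block y b) => B1 [Q [hy hB hBQ]].
have qx : qdim q (rcons x a) = qdim q P * qint q (size A1).+2.
  by rewrite hx rcons_cat qdim_cat // (@qdim_alt _ q _ q0 hA) size_rcons.
have qx' : qdim q x = qdim q P * qint q (size A1).+1.
  rewrite hx qdim_cat ?(@qdim_alt _ q _ q0 (alt_rcons hA)) //.
  move: hPA; rewrite /brk; case: A1 {hx hA qx} => [|h t] //=.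
  by rewrite !orbT.
have qy : qdim q (b :: y) = qint q (size B1).+2 * qdim q Q.
  by rewrite hy -cat_cons qdim_cat // (@qdim_alt _ q _ q0 hB).
have qy' : qdim q y = qint q (size B1).+1 * qdim q Q.
  rewrite hy qdim_cat ?(@qdim_alt _ q _ q0 (alt_behead hB)) //.
  move: hBQ; rewrite /brk; case: B1 {hy hB qy} => [|h t] //=.
have hM : alt (rcons A1 a ++ b :: B1).
  apply: alt_cat => //; first by case: A1 {hx hA hPA qx qx'}.
  rewrite last_rcons /= hb. by case: a {IH hx hA hPA qx qx' hb}.
have qxy : qdim q (rcons x a ++ b :: y) =
    qdim q P * qint q (size A1 + size B1).+3 * qdim q Q.
  have -> : rcons x a ++ b :: y = P ++ ((rcons A1 a ++ b :: B1) ++ Q).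
    by rewrite hx hy rcons_cat -!catA.
  rewrite qdim_cat; last first.
    by rewrite -catA; apply: brk_catr => //; case: A1 {hx hA hPA qx qx' hM}.
  rewrite qdim_cat; last by apply: brk_catl.
  rewrite (@qdim_alt _ q _ q0 hM) size_cat size_rcons /= mulrA.
  by congr (_ * qint q _ * _); lia.
rewrite qxy qx qx' qy qy'.
have := qint_mul (size A1).+1 (size B1).+1 q0.
rewrite (_ : ((size A1).+1 + (size B1).+1)%N = (size A1 + size B1).+2); last by lia.
move=> e.
rewrite (_ : qdim q P * qint q (size A1).+2 * (qint q (size B1).+2 * qdim q Q) =
  qdim q P * qdim q Q * (qint q (size A1).+2 * qint q (size B1).+2)); last by ring.
by rewrite e; ring.
Qed.

Lemma ps_succP (X : seq word) m z :
  reflect (exists u x, [/\ u \in prod_support X m, x \in X & z \in fusion u x])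
          (z \in prod_support X m.+1).
Proof.
apply: (iffP flattenP) => [[s /allpairsP [[u x] /= [hu hx ->]] hz]|[u [x [hu hx hz]]]].
  by exists u, x.
by exists (fusion u x) => //; apply/allpairsP; exists (u, x).
Qed.

Lemma ps_assoc (X : seq word) n m z : z \in prod_support X (n + m) ->
  exists x y, [/\ x \in prod_support X n, y \in prod_support X m & z \in fusion x y].
Proof.
elim: m z => [|m IH] z.
  by rewrite addn0 => hz; exists z, [::]; rewrite fusion_nil_r !inE.
rewrite addnS => /ps_succP [u [x0 [/IH [x [y [hx hy hu]]] hx0 hz]]].
case: (fusion_assoc hu hz) => v hv hz'.
exists x, v; split => //; apply/ps_succP; by exists y, x0.
Qed.

Lemma ballP (X : seq word) n z :
  reflect (exists2 m, (m <= n)%N & z \in prod_support X m) (z \in Defs.ball X n).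
Proof.
rewrite /ball mem_undup.
apply: (iffP flattenP) => [[s /mapP [m hm ->] hz]|[m hm hz]].
  by exists m => //; move: hm; rewrite mem_iota add0n ltnS.
by exists (prod_support X m) => //; apply/mapP; exists m => //; rewrite mem_iota add0n ltnS.
Qed.

Lemma ball_uniq (X : seq word) n : uniq (Defs.ball X n).
Proof. exact: undup_uniq. Qed.

Lemma sub_uniq_sum (R : realType) (f : word -> R) (s t : seq word) :
  uniq s -> {subset s <= t} -> (forall x, 0 <= f x) ->
  \sum_(x <- s) f x <= \sum_(x <- t) f x.
Proof.
move=> + + f0; elim: s t => [|a s IH] t.
  by move=> _ _; rewrite big_nil; apply: sumr_ge0.
rewrite cons_uniq => /andP[anot us] hsub.
have at_ : a \in t by apply: hsub; rewrite inE eqxx.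
rewrite (perm_big _ (perm_to_rem at_)) !big_cons lerD2l.
apply: IH => // x xs.
have : x \in t by apply: hsub; rewrite inE xs orbT.
rewrite (perm_mem (perm_to_rem at_)) inE => /orP[/eqP xa|//].
by move: anot; rewrite -xa xs.
Qed.

Lemma sumsq_le (R : realType) (s : seq word) (f : word -> R) :
  (forall x, 0 <= f x) -> \sum_(x <- s) f x ^+ 2 <= (\sum_(x <- s) f x) ^+ 2.
Proof.
move=> f0; elim: s => [|a s IH]; first by rewrite !big_nil expr0n.
rewrite !big_cons sqrrD -addrA lerD2l.
have h : 0 <= \sum_(x <- s) f x by apply: sumr_ge0.
apply: le_trans IH _; rewrite lerDr.
by rewrite mulrn_wge0 // mulr_ge0.
Qed.

Lemma ball_size_ge1 (R : realType) (q : R) X n : 0 < q -> 1 <= ball_size q X n.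
Proof.
move=> q0; rewrite /ball_size.
have : [::] \in Defs.ball X n by apply/ballP; exists 0%N.
move=> /perm_to_rem /(perm_big _) ->; rewrite big_cons qdim_nil expr1n lerDl.
by apply: sumr_ge0 => w _; apply: sqr_ge0.
Qed.

Lemma ball_size_submul (R : realType) (q : R) X n m : 0 < q ->
  ball_size q X (n + m) <= ball_size q X n * ball_size q X m.
Proof.
move=> q0; rewrite /ball_size.
set L := flatten [seq fusion x y | x <- Defs.ball X n, y <- Defs.ball X m].
apply: (@le_trans _ _ (\sum_(z <- L) qdim q z ^+ 2)).
  apply: sub_uniq_sum; [exact: ball_uniq| |by move=> x; apply: sqr_ge0].
  move=> z /ballP [j hj hz].
  have e : j = (minn j n + (j - minn j n))%N by rewrite subnKC // geq_minl.
  rewrite e in hz; case: (ps_assoc hz) => x [y [hx hy hxy]].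
  apply/flattenP; exists (fusion x y) => //; apply/allpairsP; exists (x, y); split => //=.
    by apply/ballP; exists (minn j n) => //; apply: geq_minr.
  by apply/ballP; exists (j - minn j n)%N => //; rewrite leq_subLR -leq_subLR; lia.
rewrite big_flatten /= big_allpairs_dep /= mulr_suml.
apply: ler_sum => x _; rewrite mulr_sumr; apply: ler_sum => y _.
apply: le_trans (sumsq_le _ _) _; first by move=> z; apply: qdim_ge0.
by rewrite fusion_dim // exprMn.
Qed.

Local Open Scope classical_set_scope.

Lemma root_le (R : realType) (x b : R) n : (0 < n)%N -> 0 <= x -> 0 <= b ->
  x <= b ^+ n -> x `^ (n%:R^-1) <= b.
Proof.
move=> n0 x0 b0 h.
have nz : (n%:R : R) != 0 by rewrite pnatr_eq0 -lt0n.
have -> : b = (b ^+ n) `^ (n%:R^-1) by rewrite -powR_mulrn // -powRrM mulfV // powRr1.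
by apply: (ge0_ler_powR _) => //; rewrite ?nnegrE ?exprn_ge0.
Qed.

Lemma root_ge (R : realType) (x b : R) n : (0 < n)%N -> 0 <= x -> 0 <= b ->
  b ^+ n <= x -> b <= x `^ (n%:R^-1).
Proof.
move=> n0 x0 b0 h.
have nz : (n%:R : R) != 0 by rewrite pnatr_eq0 -lt0n.
have -> : b = (b ^+ n) `^ (n%:R^-1) by rewrite -powR_mulrn // -powRrM mulfV // powRr1.
by apply: (ge0_ler_powR _) => //; rewrite ?nnegrE ?exprn_ge0.
Qed.

Lemma root_pow (R : realType) (x : R) n : (0 < n)%N -> 0 <= x ->
  (x `^ (n%:R^-1)) ^+ n = x.
Proof.
move=> n0 x0.
have nz : (n%:R : R) != 0 by rewrite pnatr_eq0 -lt0n.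
by rewrite -powR_mulrn ?powR_ge0 // -powRrM mulVf // powRr1.
Qed.

Lemma bernoulli (R : realType) (d : R) n : 0 <= d -> 1 + n%:R * d <= (1 + d) ^+ n.
Proof.
move=> d0; elim: n => [|n IH]; first by rewrite mul0r addr0 expr0.
rewrite exprS -natr1 mulrDl mul1r.
have h1 : 0 <= n%:R * d by rewrite mulr_ge0.
nra.
Qed.

Lemma fekete (R : realType) (a : nat -> R) : (forall n, 1 <= a n) ->
  (forall n m, a (n + m)%N <= a n * a m) ->
  cvgn (fun n => a n `^ (n%:R^-1)).
Proof.
move=> a1 asub.
have a0 : forall n, 0 <= a n by move=> n; apply: le_trans (a1 n).
set u := fun n => a n `^ (n%:R^-1).
set S := [set u n.+1 | n in [set: nat]].
have Slb : has_lbound S by exists 0 => y [n _ <-]; apply: powR_ge0.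
have Sne : S !=set0 by exists (u 1%N); exists 0%N.
have hinf : has_inf S by split.
set L := inf S.
have Lle : forall n, (0 < n)%N -> L <= u n.
  by case=> // n _; apply: (ge_inf Slb); exists n.
have L0 : 0 <= L by apply: lb_le_inf => // y [n _ <-]; apply: powR_ge0.
apply/cvg_ex; exists L; apply/cvgrPdist_le => e e0.
set eps := e / 2.
have eps0 : 0 < eps by rewrite divr_gt0.
case: (inf_adherent eps0 hinf) => _ [m' _ <-] hm.
set m := m'.+1.
set c := u m.
have c0 : 0 <= c by apply: powR_ge0.
have c1 : 1 <= c by apply: root_ge => //; rewrite expr1n.
have am : a m = c ^+ m by rewrite root_pow.
set M := \sum_(r < m) a r.
have M0 : 0 <= M by apply: sumr_ge0.
have aM : forall r, (r < m)%N -> a r <= M.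
  move=> r hr; rewrite /M (bigD1 (Ordinal hr)) //= lerDl.
  by apply: sumr_ge0.
have key : forall n, a n <= c ^+ n * M.
  elim/ltn_ind => n IH; case: (ltnP n m) => hnm.
    apply: le_trans (aM n hnm) _.
    by rewrite ler_peMl // exprn_ege1.
  have e' : n = ((n - m) + m)%N by rewrite subnK.
  rewrite e'; apply: le_trans (asub _ _) _.
  apply: (@le_trans _ _ ((c ^+ (n - m) * M) * a m)).
    by apply: ler_wpM2r => //; apply: IH; rewrite /m; lia.
  by rewrite am -mulrA (mulrC M) mulrA -exprD.
set d := eps / (L + eps).
have Le0 : 0 < L + eps by rewrite ltr_wpDl.
have d0 : 0 < d by rewrite divr_gt0.
have Ld : (L + eps) * d = eps by rewrite /d mulrC divfK // gt_eqF.
exists (maxn m (Num.truncn (M / d)).+1) => // n /= hn.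
have n0 : (0 < n)%N by move: hn; rewrite geq_max /m => /andP[]; lia.
have hMd : M <= (1 + d) ^+ n.
  apply: le_trans (bernoulli n (ltW d0)).
  have : M / d < n%:R.
    apply: lt_le_trans (truncnS_gt _) _; rewrite ler_nat.
    by move: hn; rewrite geq_max => /andP[].
  rewrite ltr_pdivrMr // => h; apply: le_trans (ltW h) _; rewrite lerDr.
  by rewrite ler01.
have hu : u n <= c * (1 + d).
  apply: root_le => //; first by rewrite mulr_ge0 // addr_ge0 // ltW.
  rewrite exprMn; apply: le_trans (key n) _.
  by apply: ler_wpM2l => //; apply: exprn_ge0.
have hL := Lle n n0.
have h1 : c * d <= eps by rewrite -Ld ler_wpM2r // ltW.
have h2 : c < L + eps by [].
have he : e = eps + eps by rewrite /eps -splitr.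
move: hu; rewrite mulrDr mulr1 => hu.
rewrite distrC ger0_norm ?subr_ge0 //.
lra.
Qed.

Local Close Scope classical_set_scope.

Definition chg (w : word) : int := \sum_(b <- w) (if b then 1 else -1).

Lemma chg_cat (u v : word) : chg (u ++ v) = chg u + chg v.
Proof. by rewrite /chg big_cat. Qed.

Lemma chg_wconj (w : word) : chg (wconj w) = - chg w.
Proof.
rewrite /chg /wconj big_rev big_map -sumrN; apply: eq_bigr => b _.
by case: b.
Qed.

Lemma chg_fusion (x y z : word) : z \in fusion x y -> chg z = chg x + chg y.
Proof.
case/fusionP=> a [b [c [-> -> ->]]].
rewrite !chg_cat chg_wconj; ring.
Qed.

Lemma gen_chg (X : seq word) : generating X -> exists2 x, x \in X & chg x != 0.
Proof.
case=> _ hg.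
case: (boolP (has (fun x => chg x != 0) X)) => [/hasP [x hx h]|/hasPn hn].
  by exists x.
case: (hg [:: true]) => n.
suff : forall z, z \in prod_support X n -> chg z = 0 by move=> h /h; rewrite /chg big_seq1.
elim: n => [|n IH] z; first by rewrite inE => /eqP ->; rewrite /chg big_nil.
case/ps_succP => u [x [hu hx hz]].
by rewrite (chg_fusion hz) (IH _ hu); move: (hn x hx); rewrite negbK => /eqP ->.
Qed.

Lemma Xcan_gen : generating Xcan.
Proof.
split.
  by move=> x; rewrite !inE => /orP[] /eqP ->.
move=> w; exists (size w).
elim/last_ind: w => [|w b IH]; first by rewrite inE.
rewrite size_rcons; apply/ps_succP; exists w, [:: b]; split => //.
  by case: b; rewrite !inE.
by rewrite -cats1 fusion_cat.
Qed.

Lemma ps_can_size n w : w \in prod_support Xcan n -> (size w <= n)%N.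
Proof.
elim: n w => [|n IH] w; first by rewrite inE => /eqP ->.
case/ps_succP => u [x [hu hx hz]].
apply: leq_trans (fusion_size hz) _.
have : size x = 1%N by move: hx; rewrite !inE => /orP[] /eqP ->.
by move=> ->; rewrite addn1 ltnS IH.
Qed.

Definition pick (x : word) (e : bool) : word := if e then x else wconj x.
Definition phi (x w : word) : word := flatten (map (pick x) w).

Lemma phi_cons x e w : phi x (e :: w) = pick x e ++ phi x w.
Proof. by []. Qed.

Lemma phi_cat x u v : phi x (u ++ v) = phi x u ++ phi x v.
Proof. by rewrite /phi map_cat flatten_cat. Qed.

Lemma phi_rcons x w e : phi x (rcons w e) = phi x w ++ pick x e.
Proof. by rewrite -cats1 phi_cat /phi /= cats0. Qed.

Lemma size_phi x w : size (phi x w) = (size w * size x)%N.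
Proof.
elim: w => [|e w IH] //=; rewrite phi_cons size_cat IH mulSn.
by case: e; rewrite /= ?size_wconj.
Qed.

Lemma phi_ps (X : seq word) x w : (forall y, y \in X -> wconj y \in X) -> x \in X ->
  phi x w \in prod_support X (size w).
Proof.
move=> hX hx; elim/last_ind: w => [|w e IH]; first by rewrite inE.
rewrite size_rcons phi_rcons; apply/ps_succP; exists (phi x w), (pick x e); split => //.
  by case: e; rewrite /pick //; apply: hX.
exact: fusion_cat.
Qed.

Lemma chg_ne (x : word) : chg x != 0 -> x != wconj x /\ x != [::].
Proof.
move=> h; split.
  apply: contra h => /eqP e; move: (chg_wconj x); rewrite -e => /eqP.
  by rewrite -subr_eq0 opprK -mulr2n mulrn_eq0 /= => /eqP ->.
by apply: contra h => /eqP ->; rewrite /chg big_nil.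
Qed.

Lemma phi_inj x : x != wconj x -> x != [::] -> injective (phi x).
Proof.
move=> hx hx0.
have L0 : (0 < size x)%N by rewrite lt0n size_eq0.
suff : forall w1 w2, size w1 = size w2 -> phi x w1 = phi x w2 -> w1 = w2.
  move=> h w1 w2 e; apply: h (e).
  have := congr1 size e; rewrite !size_phi => /eqP; rewrite eqn_mul2r.
  by case/orP => [/eqP h0|/eqP //]; move: L0; rewrite h0.
elim=> [|e1 w1 IH] [|e2 w2] //= [hs] /=.
rewrite !phi_cons => h.
have hp : pick x e1 = pick x e2.
  have := congr1 (take (size x)) h.
  rewrite !take_size_cat //; by case: (e1); case: (e2); rewrite /= ?size_wconj.
have he : e1 = e2.
  by move: hp; case: (e1); case: (e2) => //= /eqP; rewrite ?(negbTE hx) // eq_sym (negbTE hx).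
move: h; rewrite he => /eqP; rewrite eqseq_cat // => /andP[_ /eqP h].
by rewrite (IH w2).
Qed.

Lemma wconj_cons h (r : word) : wconj (h :: r) = rcons (wconj r) (~~ h).
Proof. by rewrite /wconj /= rev_cons. Qed.

Lemma head_wconj (w : word) : w != [::] -> head true (wconj w) = ~~ last true w.
Proof. by case/lastP: w => [|w l] // _; rewrite wconj_rcons last_rcons. Qed.

Lemma last_wconj (w : word) : w != [::] -> last true (wconj w) = ~~ head true w.
Proof. by case: w => [|h w] // _; rewrite wconj_cons last_rcons. Qed.

Lemma wconj_eq0 (w : word) : (wconj w == [::]) = (w == [::]).
Proof. by rewrite -!size_eq0 size_wconj. Qed.

Lemma nonalt_split (w : word) : ~~ alt w ->
  exists p r, [/\ w = p ++ r, p != [::], r != [::] & last true p = head true r].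
Proof.
elim: w => [|a w IH] //.
case: w IH => [|b w] IH //.
rewrite /alt /= => h.
case: (eqVneq a b) => [ab|ab].
  by exists [:: a], (b :: w); split => //=; rewrite ab.
move: h; rewrite ab /= => /IH [p [r [e hp hr hl]]].
exists (a :: p), r; split => //; first by rewrite e.
by case: p e hp hl.
Qed.

Lemma pick_split x e : ~~ alt x ->
  exists p r, [/\ pick x e = p ++ r, p != [::], r != [::] & last true p = head true r].
Proof.
move=> /nonalt_split [p [r [e1 hp hr hl]]].
case: e; first by exists p, r.
exists (wconj r), (wconj p); split.
- by rewrite /pick e1 wconj_cat.
- by rewrite wconj_eq0.
- by rewrite wconj_eq0.
- by rewrite last_wconj // head_wconj // hl.
Qed.

Lemma qint2 (R : realType) (q : R) : 0 < q -> qint q 2 = q + q^-1.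
Proof. by move=> q0; rewrite qint_rec // qint1 // qint0 subr0 mulr1. Qed.

Lemma case1 (R : realType) (q : R) x : 0 < q -> ~~ alt x ->
  forall w r, (q + q^-1) ^+ size w <= qdim q (r ++ phi x w).
Proof.
move=> q0 hx; elim=> [|e w IH] r.
  by rewrite expr0 qdim_ge1.
case: (pick_split e hx) => p [r' [hpe hp hr' hl]].
rewrite phi_cons hpe.
have -> : r ++ (p ++ r') ++ phi x w = (r ++ p) ++ (r' ++ phi x w) by rewrite -!catA.
rewrite qdim_cat; last first.
  rewrite /brk; case: r' hr' hl {hpe} => [|h r'] // _ hl.
  rewrite last_cat; case: p hp hl => [|h' p] //= _ ->.
  by rewrite eqxx !orbT.
have t0 : 0 <= q + q^-1 by apply: le_trans (qt_ge2 q0); rewrite ler0n.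
rewrite exprS; apply: ler_pM => //; first exact: exprn_ge0.
apply: le_trans (qdim_ge _ q0); rewrite -qint2 //; apply: qint_mono => //.
rewrite size_cat ltnS; have : (0 < size p)%N by rewrite lt0n size_eq0. lia.
Qed.

Lemma chg_alt a (w : word) : path (fun a b : bool => a != b) a w ->
  chg (a :: w) = if last a w == a then (if a then 1 else -1) else 0.
Proof.
elim: w a => [|b w IH] a /=.
  by rewrite eqxx /chg big_seq1.
move=> /andP[ab hp].
have -> : chg [:: a, b & w] = (if a then 1 else -1) + chg (b :: w) by rewrite /chg big_cons.
rewrite IH //.
have hb : b = ~~ a by case: a b ab {hp} => [] [].
rewrite hb; case: eqP => [->|hn].
  by case: a {ab hb}; rewrite /= ?eqxx //=; ring.
have -> : last (~~ a) w == a by case: (last (~~ a) w) hn; case: (a).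
by rewrite addr0.
Qed.

Lemma alt_wconj (w : word) : alt w -> alt (wconj w).
Proof.
elim/last_ind: w => [|w a IH] //.
rewrite wconj_rcons.
case/lastP: w IH => [|w b] IH //.
rewrite wconj_rcons in IH *.
rewrite /alt [sorted _ (_ :: _)]/= [sorted _ (_ :: _)]/= in IH *.
move=> h; have /IH -> : alt (rcons w b) by exact: alt_rcons h.
move: h; case: w {IH} => [|h w] /=; rewrite ?rcons_path /=.
  by case: a b => [] [].
by move=> /andP[_]; rewrite last_rcons; case: a b => [] [].
Qed.

Lemma pick_facts (x : word) : alt x -> x != [::] -> last true x = head true x ->
  forall e, [/\ pick x e != [::], alt (pick x e),
     head true (pick x e) = (if e then head true x else ~~ head true x) &
     last true (pick x e) = (if e then head true x else ~~ head true x)].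
Proof.
move=> ha hn hl [] /=; first by split.
split.
- by rewrite wconj_eq0.
- exact: alt_wconj.
- by rewrite head_wconj // hl.
- by rewrite last_wconj.
Qed.

Lemma head_phi x (Q : word) : x != [::] -> Q != [::] ->
  head true (phi x Q) = head true (pick x (head true Q)).
Proof.
move=> hx; case: Q => [|e Q] //= _; rewrite phi_cons.
have : pick x e != [::] by case: e; rewrite /pick ?wconj_eq0.
by case: (pick x e).
Qed.

Lemma last_phi x (Q : word) : x != [::] -> Q != [::] ->
  last true (phi x Q) = last true (pick x (last true Q)).
Proof.
move=> hx; case/lastP: Q => [|Q e] // _; rewrite phi_rcons last_rcons last_cat.
have : pick x e != [::] by case: e; rewrite /pick ?wconj_eq0.
by case: (pick x e).
Qed.

Lemma alt_phi (x : word) : alt x -> x != [::] -> last true x = head true x ->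
  forall A, alt A -> alt (phi x A).
Proof.
move=> ha hn hl; have pf := pick_facts ha hn hl.
elim=> [|e A IH] //.
case: A IH => [|e' A] IH h.
  by rewrite /phi /= cats0; case: (pf e).
rewrite phi_cons; apply: alt_cat.
- by case: (pf e).
- by rewrite phi_cons; case: (pf e') => hne _ _ _; case: (pick x e') hne.
- by case: (pf e).
- by apply: IH; apply: alt_behead h.
rewrite head_phi //=; case: (pf e) => _ _ _ ->; case: (pf e') => _ _ -> _.
move: h; rewrite /alt /= => /andP[].
by case: (e) (e') => [] [] //= _ _; case: (head true x).
Qed.

Lemma case2 (R : realType) (q : R) (x : word) : 0 < q -> alt x -> x != [::] ->
  last true x = head true x -> forall w, qdim q w <= qdim q (phi x w).
Proof.
move=> q0 ha hn hl; have pf := pick_facts ha hn hl.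
have L0 : (0 < size x)%N by rewrite lt0n size_eq0.
move=> w0; elim: (size w0).+1 {-2}w0 (ltnSn (size w0)) => [//|n IH] [|b w] hw.
  by rewrite /phi /= lexx.
case: (first_block w b) => B1 [Q [ew hB hBQ]]; rewrite ew.
rewrite -cat_cons phi_cat (@qdim_cat _ q _ _ hBQ).
rewrite (@qdim_cat _ q (phi x (b :: B1)) (phi x Q)); last first.
  case: Q hBQ {hw ew} => [|c Q]; first by rewrite /brk /phi /= orbT.
  rewrite /brk /= => /eqP hlq.
  rewrite last_phi // head_phi //= hlq.
  by case: (pf c) => _ _ -> ->; rewrite eqxx !orbT.
rewrite (@qdim_alt _ q _ q0 hB) (@qdim_alt _ q _ q0 (alt_phi ha hn hl hB)).
apply: ler_pM.
- exact: qint_ge0.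
- exact: qdim_ge0.
- apply: qint_mono => //; rewrite size_phi /= ltnS.
  by rewrite -[X in (X <= _)%N]muln1 leq_mul.
- apply: IH; move: hw; rewrite ew /= size_cat; lia.
Qed.

Lemma qdim_phi (R : realType) (q : R) (x : word) : 0 < q -> chg x != 0 ->
  forall w, qdim q w <= qdim q (phi x w).
Proof.
move=> q0 hc w; have [hx0 hx1] := chg_ne hc.
case: (boolP (alt x)) => ha.
  apply: case2 => //.
  case: x ha hc {hx0 hx1} => [|a x] //= ha.
  rewrite chg_alt //; case: (eqVneq (last a x) a) => [//|_ /eqP h0]; by exfalso; apply: h0.
apply: le_trans (qdim_le_pow _ q0) _.
exact: (case1 q0 ha w [::]).
Qed.

Lemma ball_ge (R : realType) (q : R) (X : seq word) n : 0 < q -> generating X ->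
  ball_size q Xcan n <= ball_size q X n.
Proof.
move=> q0 hX; case: (gen_chg hX) => x hxX hc.
have [hx0 hx1] := chg_ne hc.
rewrite /ball_size.
apply: (@le_trans _ _ (\sum_(w <- Defs.ball Xcan n) qdim q (phi x w) ^+ 2)).
  apply: ler_sum => w _; rewrite !expr2.
  by apply: ler_pM; rewrite ?qdim_ge0 ?qdim_phi.
rewrite -(big_map (phi x) xpredT (fun z => qdim q z ^+ 2)).
apply: sub_uniq_sum; last by move=> z; apply: sqr_ge0.
  by rewrite map_inj_uniq ?ball_uniq //; apply: phi_inj.
move=> z /mapP [w /ballP [m hm hw] ->].
apply/ballP; exists (size w).
  by apply: leq_trans hm; apply: ps_can_size hw.
by apply: phi_ps => //; case: hX.
Qed.

Lemma omegaX_cvg (R : realType) (q : R) (X : seq word) : 0 < q ->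
  cvgn (fun n : nat => ball_size q X n `^ (n%:R^-1)).
Proof.
move=> q0; apply: fekete.
  by move=> n; apply: ball_size_ge1.
by move=> n m; apply: ball_size_submul.
Qed.

Lemma omegaX_ge (R : realType) (q : R) (X : seq word) : 0 < q -> generating X ->
  omegaX q Xcan <= omegaX q X.
Proof.
move=> q0 hX; rewrite /omegaX.
apply: ler_lim; [exact: omegaX_cvg | exact: omegaX_cvg |].
apply: nearW => n.
apply: (ge0_ler_powR _); first by rewrite invr_ge0 ler0n.
- by rewrite nnegrE (le_trans ler01 (ball_size_ge1 _ _ q0)).
- by rewrite nnegrE (le_trans ler01 (ball_size_ge1 _ _ q0)).
exact: ball_ge.
Qed.

Local Open Scope classical_set_scope.

Lemma omega_eq (R : realType) (q : R) : 0 < q -> omega q = omegaX q Xcan.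
Proof.
move=> q0; rewrite /omega.
set S := [set omegaX q X | X in generating].
have hS : S (omegaX q Xcan) by exists Xcan => //; exact: Xcan_gen.
have lb : lbound S (omegaX q Xcan) by move=> y [X hX <-]; apply: omegaX_ge.
apply/le_anti/andP; split.
  by apply: (ge_inf _) => //; exists (omegaX q Xcan).
by apply: lb_le_inf => //; exists (omegaX q Xcan).
Qed.

Local Close Scope classical_set_scope.
Unset Implicit Arguments. Set Strict Implicit. Set Printing Implicit Defensive.
Local Open Scope complex_scope.

Theorem proposition7p6 (R : realType) (N : nat) (F : 'M[R[i]]_N) (q : R) :
  (2 <= N)%N ->
  F \in unitmx ->
  \tr (adjmx F *m F) = \tr (invmx (adjmx F *m F)) ->
  0 < q -> q <= 1 ->
  (q + q^-1)%:C = \tr (adjmx F *m F) ->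
  omega q = omegaX q Xcan.
Proof.
move=> _ _ _ q0 _ _.
exact: omega_eq.
Qed.
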